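(* Let $n, k, r \ge 1$ be integers and let $S=\{(x_i,z_i)\}_{i=1}^n$ with $x_i\in\mathbb{R}^k$ pairwise distinct and $z_i\in\mathbb{R}^r$ arbitrary. Let $d_1,d_2\ge 1$ be integers satisfying $4\lfloor d_1/4\rfloor\,\lfloor d_2/(4r)\rfloor \ge n$ (in particular $d_1d_2\ge 4nr$). Then there exist weight matrices $W_1\in\mathbb{R}^{d_1\times k}$, $W_2\in\mathbb{R}^{d_2\times d_1}$, $W_3\in\mathbb{R}^{r\times d_2}$ and bias vectors $b_1\in\mathbb{R}^{d_1}$, $b_2\in\mathbb{R}^{d_2}$, $b_3\in\mathbb{R}^{r}$ such that the three-layer ReLU network $$g_\theta(x)=W_3\,\sigma\big(W_2\,\sigma(W_1x+b_1)+b_2\big)+b_3,\qquad \sigma(t)=\max(t,0)\text{ applied entrywise},$$ satisfies $g_\theta(x_i)=z_i$ for all $i=1,\dots,n$.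
   Context: A ''three-layer ReLU network'' with hidden widths $d_1,d_2$ means a fully connected feedforward map $\mathbb{R}^k\to\mathbb{R}^r$ with two hidden layers of widths $d_1$ and $d_2$, each followed by the entrywise ReLU activation $\sigma(t)=\max(t,0)$, and a final affine (linear plus bias, no activation) output layer, as written in the claim. *)

(* Defs.v *)
From mathcomp Require Import all_boot all_order all_algebra.
From mathcomp Require Import reals.
Set Implicit Arguments. Unset Strict Implicit. Unset Printing Implicit Defensive.
Import Order.TTheory GRing.Theory Num.Theory.
Local Open Scope ring_scope.

Definition relu {R : realType} {m : nat} (v : 'cV[R]_m) : 'cV[R]_m :=
  map_mx (fun t => Num.max t 0) v.

Definition net3 {R : realType} {k d1 d2 r : nat}
  (W1 : 'M[R]_(d1, k)) (b1 : 'cV[R]_d1)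
  (W2 : 'M[R]_(d2, d1)) (b2 : 'cV[R]_d2)
  (W3 : 'M[R]_(r, d2)) (b3 : 'cV[R]_r) (x : 'cV[R]_k) : 'cV[R]_r :=
  W3 *m relu (W2 *m relu (W1 *m x + b1) + b2) + b3.

(* Main.v *)
Require Import Defs.
From mathcomp Require Import all_boot all_order all_algebra.
From mathcomp Require Import reals.
From mathcomp Require Import ring lra zify.
Import Order.TTheory GRing.Theory Num.Theory.
Local Open Scope ring_scope.
Set Implicit Arguments. Unset Strict Implicit.



Lemma exists_proj (R : realType) (n k : nat) (x : 'I_n -> 'cV[R]_k) :
  injective x -> exists a : 'rV[R]_k, injective (fun i => (a *m x i) 0 0).
Proof.
move=> xinj.
pose pv (v : 'cV[R]_k) : {poly R} := \sum_(j < k) v j 0 *: 'X^j.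
have pvE v (l : R) : (pv v).[l] = ((\row_j l ^+ j) *m v) 0 0.
  rewrite horner_sum !mxE; apply: eq_bigr => j _.
  by rewrite hornerZ hornerXn mxE mulrC.
have pv0 v : v != 0 -> pv v != 0.
  move=> /eqP vn0; apply/eqP => h; apply: vn0; apply/matrixP => i j.
  rewrite (ord1 j) mxE; have := congr1 (fun q : {poly R} => q`_i) h.
  rewrite coef_sum coef0 (bigD1 i) //= big1 ?addr0 ?coefZ ?coefXn ?eqxx ?mulr1 //.
  by move=> l /negbTE nl; rewrite coefZ coefXn (inj_eq val_inj) eq_sym nl mulr0.
pose P := \prod_(ij : 'I_n * 'I_n | ij.1 != ij.2) pv (x ij.1 - x ij.2).
have P0 : P != 0.
  apply/prodf_neq0 => ij /= ne; apply: pv0; rewrite subr_eq0.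
  by apply: contra ne => /eqP/xinj ->.
have [l lroot] : exists l : R, ~~ root P l.
  have rs_uniq : uniq [seq (i%:R : R) | i <- iota 0 (size P)].
    by rewrite map_inj_uniq ?iota_uniq //; apply: mulrIn; rewrite oner_eq0.
  have := contraNN (fun x => max_poly_roots P0 x rs_uniq).
  rewrite size_map size_iota ltnn => /(_ isT) /allPn[a a_in rootNpa].
  by exists a.
exists (\row_j l ^+ j) => i j /= e; apply/eqP; apply: contraNT lroot => ne.
rewrite /root /P horner_prod; apply/prodf_eq0.
exists (i, j) => //=; rewrite pvE mulmxBr.
set A := (_ *m x i); set B := (_ *m x j).
have -> : (A - B) 0 0 = A 0 0 - B 0 0 by rewrite !mxE.
by rewrite /A /B e subrr.
Qed.


Lemma exists_sort (R : realType) (n : nat) (t : 'I_n -> R) :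
  injective t ->
  exists (rho pi : 'I_n -> 'I_n) (s : nat -> R),
    cancel rho pi /\ (forall i, t i = s (rho i)) /\
    (forall p q, (p < q)%N -> s p < s q).
Proof.
move=> tinj.
pose A i := [pred j | t j < t i].
have rlt i : (#|A i| < n)%N.
  have : (#|A i| <= #|predC1 i|)%N.
    by apply: subset_leq_card; apply/subsetP => j; rewrite !inE => /=; apply: contraTneq => ->; rewrite ltxx.
  rewrite cardC1 card_ord => h; apply: leq_ltn_trans h _; rewrite ltn_predL; exact: leq_ltn_trans (leq0n _) (ltn_ord i).
pose rho i := Ordinal (rlt i).
have rmono i j : t i < t j -> (rho i < rho j)%N.
  move=> lij; rewrite /rho /=; apply: proper_card; apply/properP; split.
    by apply/subsetP => l; rewrite !inE /=; move=> h; apply: lt_trans h lij.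
  by exists i; rewrite !inE /= ?ltxx.
have rinj : injective rho.
  move=> i j e; apply: tinj; case: (ltgtP (t i) (t j)) => // h.
    by have := rmono _ _ h; rewrite e ltnn.
  by have := rmono _ _ h; rewrite e ltnn.
pose pi := invF rinj.
pose T := \sum_i `|t i|.
have tT i : t i <= T.
  rewrite /T (bigD1 i) //=; apply: le_trans (ler_norm _) _; rewrite lerDl sumr_ge0 // => j _.
pose s p := oapp (fun o => t (pi o)) (T + p.+1%:R) (insub p).
exists rho, pi, s; split; first exact: invF_f.
split.
  by move=> i; rewrite /s valK /= /pi invF_f.
have key (a b : 'I_n) : (a < b)%N -> t (pi a) < t (pi b).
  move=> ab; case: (ltgtP (t (pi a)) (t (pi b))) => // h.
    by have := rmono _ _ h; rewrite !f_invF => /(ltn_trans ab); rewrite ltnn.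
  by move: (tinj _ _ h) => /(can_inj (f_invF rinj)) e; move: ab; rewrite e ltnn.
move=> p q pq; rewrite /s.
case: insubP => [a ap aE|np]; case: insubP => [b bp bE|nq] /=.
- by apply: key; rewrite aE bE.
- by apply: le_lt_trans (tT _) _; rewrite ltrDl ltr0n.
- by move: np; rewrite (ltn_trans pq bp).
- by rewrite ltrD2l ltr_nat ltnS.
Qed.


Lemma sum_pairs (R : realType) (F : nat -> R) S :
  \sum_(l < 2 * S) F l = \sum_(o < S) (F (2 * o)%N + F (2 * o).+1).
Proof.
elim: S => [|S IH]; first by rewrite !big_ord0.
rewrite [RHS]big_ord_recr /= -IH.
have -> : (2 * S.+1 = (2 * S).+1.+1)%N by rewrite mulnS addnC addn2.
by rewrite !big_ord_recr /= addrA.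
Qed.

Lemma sum_trunc (R : realType) (F : nat -> R) m d :
  (m <= d)%N -> (forall l, (m <= l)%N -> F l = 0) ->
  \sum_(l < d) F l = \sum_(l < m) F l.
Proof.
move=> md F0; rewrite -!(big_mkord xpredT F) (big_cat_nat (n := m)) //=.
rewrite [X in _ + X]big_nat_cond [X in _ + X]big1 ?addr0 // => l /andP[/andP[ml _] _].
exact: F0.
Qed.

Lemma sum_block (R : realType) (F : nat -> R) m d c :
  (0 < m)%N -> (c * m + m <= d)%N ->
  \sum_(j < d) (if (j %/ m)%N == c then F j else 0) = \sum_(w < m) F (c * m + w)%N.
Proof.
move=> m0 cmd.
rewrite -(big_mkord xpredT (fun j => if (j %/ m)%N == c then F j else 0)) (big_cat_nat (n := (c * m)%N)) //=; last exact: leq_trans (leq_addr m _) cmd.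
rewrite [X in _ + X](big_cat_nat (n := (c * m + m)%N)) //= ?leq_addr //.
rewrite big_nat_cond big1 ?add0r; last first.
  move=> j /andP[/andP[_ jl] _]; case: eqP => // e.
  by move: jl; rewrite -(ltn_divLR _ _ m0) e ltnn.
rewrite [X in _ + X]big_nat_cond [X in _ + X]big1 ?addr0; last first.
  move=> j /andP[/andP[jl _] _]; case: eqP => // e.
  by move: jl; rewrite -mulSnr -(leq_divRL _ _ m0) e ltnn.
rewrite -{1}[(c * m)%N]add0n big_addn addKn big_mkord; apply: eq_bigr => w _.
by rewrite addnC divnMDl // divn_small // addn0 eqxx.
Qed.

Lemma sum_upto (R : realType) (D : nat -> R) q S :
  (q < S)%N -> \sum_(o < S) (if (o <= q)%N then D o else 0) = \sum_(o < q.+1) D o.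
Proof.
move=> qS; rewrite (@sum_trunc _ (fun o => if (o <= q)%N then D o else 0) q.+1 S) //; last by move=> l; rewrite ltnNge => /negbTE ->.
by apply: eq_bigr => o _; rewrite -ltnS ltn_ord.
Qed.

Lemma max0_bounds (R : realType) (x : R) : 0 <= Num.max x 0 /\ Num.max x 0 <= `|x|.
Proof.
case: (boolP (0 <= x)) => hx.
  by rewrite max_l // ger0_norm.
move: hx; rewrite -ltNge => hx.
by rewrite max_r; [split => //; exact: normr_ge0 | exact: ltW].
Qed.

Lemma max0_diff (R : realType) (x : R) : Num.max x 0 - Num.max (- x) 0 = x.
Proof.
case: (boolP (0 <= x)) => hx.
  by rewrite max_l // max_r ?subr0 // oppr_le0.
move: hx; rewrite -ltNge => hx.
by rewrite max_r ?ltW // max_l ?sub0r ?opprK // oppr_ge0 ltW.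
Qed.

Section Core.
Variable R : realType.
Variable s : nat -> R.
Variable y : nat -> nat -> R.
Variables L S : nat.
Hypothesis s_lt : forall p q, (p < q)%N -> s p < s q.
Hypothesis L0 : (0 < L)%N.

Lemma s_le p q : (p <= q)%N -> s p <= s q.
Proof. by rewrite leq_eqVlt => /orP[/eqP->//|/s_lt/ltW]. Qed.

Definition gap p := if p is p'.+1 then s p - s p' else 1.

Lemma gap_pos p : 0 < gap p.
Proof. by case: p => [|p] //=; rewrite subr_gt0 s_lt. Qed.

Lemma below p q : (q < p)%N -> s q <= s p - gap p.
Proof. by case: p => [|p] //= qp; rewrite opprB addrC subrK s_le. Qed.

Definition cpt o (b : bool) := s (o * L)%N - (if b then 1 else 2%:R) * (gap (o * L)%N / 3%:R).

Lemma hinge o b p :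
  Num.max (s p - cpt o b) 0 = if (o * L <= p)%N then s p - cpt o b else 0.
Proof.
have g3 : 0 < gap (o * L)%N / 3%:R by rewrite divr_gt0 ?gap_pos ?ltr0n.
case: ifP => h.
  apply: max_l; rewrite subr_ge0 /cpt; rewrite (le_trans _ (s_le h)) //.
  by rewrite lerBlDr lerDl mulr_ge0 ?ltW //; case: b.
apply: max_r; rewrite subr_le0; move/negbT: h; rewrite -ltnNge => /below h.
rewrite (le_trans h) // /cpt; have gp := gap_pos (o * L)%N.
by case: b; lra.
Qed.


Definition uu j := ((j %% (2 * L)) %/ 2)%N.
Definition cc j := (j %/ (2 * L))%N.
Definition gg c o v := if v is v'.+1 then y c (o * L + v')%N else 0.
Definition hst c o u := gg c o u.+1 - gg c o u.
Definition p0 j o := (o * L + uu j)%N.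
Definition Mj j o := `|hst (cc j) o (uu j)| / gap (p0 j o).
Definition off j o := if odd j then Num.max (- hst (cc j) o (uu j)) 0
                      else Num.max (hst (cc j) o (uu j)) 0.
Definition Aa j o := Mj j o.
Definition Ab j o := off j o - Mj j o * s (p0 j o).
Definition Ea j o := if o is o'.+1 then Aa j o' else 0.
Definition Eb j o := if o is o'.+1 then Ab j o' else 0.
Definition Dv j o (u : R) := (Ea j o.+1 - Ea j o) * u + (Eb j o.+1 - Eb j o).

Definition W2f j l := if (l./2 < S)%N then
   (let o := l./2 in let c0 := cpt o false in let c1 := cpt o true in
    if odd l then Dv j o c0 / (c0 - c1) else Dv j o c1 / (c1 - c0)) else 0.
Definition h1 (tv : R) l := if (l./2 < S)%N then Num.max (tv - cpt l./2 (odd l)) 0 else 0.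

Lemma cpt_neq o : cpt o true - cpt o false != 0.
Proof. rewrite /cpt; have := gap_pos (o * L)%N; apply: contraTneq => h; lra. Qed.

Lemma pair_val j o p : (o < S)%N ->
  W2f j (2 * o)%N * h1 (s p) (2 * o)%N + W2f j (2 * o).+1 * h1 (s p) (2 * o).+1
  = if (o * L <= p)%N then Dv j o (s p) else 0.
Proof.
move=> oS.
have h0 : ((2 * o)./2 = o)%N by rewrite mul2n doubleK.
have h1' : ((2 * o).+1./2 = o)%N by rewrite mul2n -[(o.*2).+1]/(true + o.*2)%N half_bit_double.
have o0 : odd (2 * o) = false by rewrite mul2n odd_double.
have o1 : odd (2 * o).+1 = true by rewrite /= o0.
rewrite /W2f /h1 h0 h1' o0 o1 oS !hinge; case: ifP => _; last by rewrite !mulr0 addr0.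
have := cpt_neq o; rewrite /Dv.
set c0 := cpt o false; set c1 := cpt o true => ne.
have ne' : c0 - c1 != 0 by rewrite -opprB oppr_eq0.
clearbody c0 c1; set A := (Ea j o.+1 - Ea j o); set B := (Eb j o.+1 - Eb j o); clearbody A B.
by field; rewrite ne ne'.
Qed.

Lemma preact j p d1 : (2 * S <= d1)%N -> (p < S * L)%N ->
  \sum_(l < d1) W2f j l * h1 (s p) l = Aa j (p %/ L) * s p + Ab j (p %/ L).
Proof.
move=> Sd pS.
rewrite (@sum_trunc _ (fun l => W2f j l * h1 (s p) l) (2 * S) d1) //; last first.
  move=> l lS; have : (S <= l./2)%N by rewrite -[S](@doubleK) -mul2n half_leq.
  by rewrite /W2f leqNgt => /negbTE ->; rewrite mul0r.
rewrite (@sum_pairs _ (fun l => W2f j l * h1 (s p) l) S).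
have qS : (p %/ L < S)%N by rewrite ltn_divLR.
rewrite (eq_bigr (fun o : 'I_S => if (o <= p %/ L)%N then Dv j o (s p) else 0)); last first.
  by move=> o _; rewrite pair_val // leq_divRL.
rewrite (@sum_upto _ (fun o => Dv j o (s p))) // /Dv big_split /= -mulr_suml.
rewrite -(big_mkord xpredT (fun o => Ea j o.+1 - Ea j o)) telescope_sumr //.
rewrite -(big_mkord xpredT (fun o => Eb j o.+1 - Eb j o)) telescope_sumr //.
by rewrite /= !subr0.
Qed.

Lemma unit_val j p :
  Num.max (Aa j (p %/ L) * s p + Ab j (p %/ L)) 0 =
  if (uu j <= p %% L)%N then Mj j (p %/ L) * (s p - s (p0 j (p %/ L))) + off j (p %/ L) else 0.
Proof.
set o := (p %/ L)%N.
have -> : Aa j o * s p + Ab j o = Mj j o * (s p - s (p0 j o)) + off j o.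
  by rewrite /Aa /Ab; ring.
have pE : p = (o * L + p %% L)%N by rewrite /o -divn_eq.
have [offge offle] : 0 <= off j o /\ off j o <= `|hst (cc j) o (uu j)|.
  rewrite /off; case: (odd j); last exact: max0_bounds.
  by rewrite -normrN; exact: max0_bounds.
have gp := gap_pos (p0 j o).
have Mge : 0 <= Mj j o by rewrite /Mj divr_ge0 // ltW.
case: ifP => h.
  apply: max_l; apply: addr_ge0 => //; apply: mulr_ge0 => //.
  by rewrite subr_ge0 s_le // [X in (_ <= X)%N]pE /p0 leq_add2l.
apply: max_r.
have lt : (p < p0 j o)%N by rewrite [X in (X < _)%N]pE /p0 ltn_add2l ltnNge h.
have := below lt.
have MG : Mj j o * gap (p0 j o) = `|hst (cc j) o (uu j)|.
  by rewrite /Mj mulfVK // gt_eqF.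
move=> sb.
have : Mj j o * (s p - s (p0 j o)) <= Mj j o * (- gap (p0 j o)).
  by rewrite ler_wpM2l // lerBlDr addrC.
rewrite mulrN MG; lra.
Qed.

Definition W3f (c j : nat) : R :=
  if (j %/ (2 * L))%N == c then (if odd j then -1 else 1) else 0.

Lemma unit_val2 j p c u : cc j = c -> uu j = u ->
  Num.max (Aa j (p %/ L) * s p + Ab j (p %/ L)) 0 =
  if (u <= p %% L)%N then
    `|hst c (p %/ L) u| / gap (p %/ L * L + u)%N * (s p - s (p %/ L * L + u)%N)
    + (if odd j then Num.max (- hst c (p %/ L) u) 0 else Num.max (hst c (p %/ L) u) 0)
  else 0.
Proof. by move=> cj uj; rewrite unit_val /Mj /off /p0 cj uj. Qed.

Lemma output c p d2 : (c * (2 * L) + 2 * L <= d2)%N -> (p < S * L)%N ->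
  \sum_(j < d2) W3f c j * Num.max (Aa j (p %/ L) * s p + Ab j (p %/ L)) 0 = y c p.
Proof.
move=> cd pS.
set F := fun j : nat => (if odd j then -1 else 1) * Num.max (Aa j (p %/ L) * s p + Ab j (p %/ L)) 0.
rewrite (eq_bigr (fun j : 'I_d2 => if (j %/ (2 * L))%N == c then F j else 0)); last first.
  by move=> j _; rewrite /W3f /F; case: ifP => _ //; rewrite mul0r.
rewrite sum_block ?muln_gt0 //.
rewrite (@sum_pairs _ (fun w => F (c * (2 * L) + w)%N) L).
have qL : (p %% L < L)%N by rewrite ltn_pmod.
rewrite (eq_bigr (fun u : 'I_L => if (u <= p %% L)%N then hst c (p %/ L) u else 0)); last first.
  move=> u _.
  have u2 : (2 * u < 2 * L)%N by rewrite ltn_pmul2l.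
  have u3 : ((2 * u).+1 < 2 * L)%N.
    by rewrite mul2n -[(u.*2).+1]/(true + u.*2)%N mul2n ltn_Sdouble.
  have o0 : odd (c * (2 * L) + 2 * u)%N = false.
    by rewrite oddD !oddM /= andbF.
  have o1 : odd (c * (2 * L) + (2 * u).+1)%N = true.
    by rewrite addnS /= o0.
  have cc0 : cc (c * (2 * L) + 2 * u)%N = c.
    by rewrite /cc divnMDl ?muln_gt0 // divn_small // addn0.
  have cc1 : cc (c * (2 * L) + (2 * u).+1)%N = c.
    by rewrite /cc divnMDl ?muln_gt0 // divn_small // addn0.
  have uu0 : uu (c * (2 * L) + 2 * u)%N = u.
    by rewrite /uu modnMDl modn_small // mulKn.
  have uu1 : uu (c * (2 * L) + (2 * u).+1)%N = u.
    rewrite /uu modnMDl modn_small // mul2n -[(u.*2).+1]/(true + u.*2)%N.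
    by rewrite divn2 half_bit_double.
  rewrite /F (unit_val2 _ cc0 uu0) (unit_val2 _ cc1 uu1) o0 o1.
  case: ifP => _; last by rewrite !mulr0 addr0.
  by rewrite mul1r mulN1r opprD addrACA subrr add0r max0_diff.
rewrite (@sum_upto _ (fun u => hst c (p %/ L) u)) // /hst.
rewrite -(big_mkord xpredT (fun u => gg c (p %/ L) u.+1 - gg c (p %/ L) u)) telescope_sumr //.
by rewrite /= subr0 -divn_eq.
Qed.

End Core.

Unset Implicit Arguments.

Theorem mainTheorem1 (R : realType) (n k r d1 d2 : nat)
  (x : 'I_n -> 'cV[R]_k) (z : 'I_n -> 'cV[R]_r) :
  (1 <= n)%N -> (1 <= k)%N -> (1 <= r)%N -> (1 <= d1)%N -> (1 <= d2)%N ->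
  injective x ->
  (n <= 4 * (d1 %/ 4) * (d2 %/ (4 * r)))%N ->
  exists (W1 : 'M[R]_(d1, k)) (b1 : 'cV[R]_d1)
         (W2 : 'M[R]_(d2, d1)) (b2 : 'cV[R]_d2)
         (W3 : 'M[R]_(r, d2)) (b3 : 'cV[R]_r),
    forall i : 'I_n, net3 W1 b1 W2 b2 W3 b3 (x i) = z i.
Proof.
move=> n1 _ r1 _ _ xinj hn.
have e1 := leq_trunc_div d1 4.
have e2 := leq_trunc_div d2 (4 * r).
move: hn e1 e2; set m1 := (d1 %/ 4)%N; set m2 := (d2 %/ (4 * r))%N => hn e1 e2.
set S := (2 * m1)%N.
set L := (2 * m2)%N.
have nSL : (n <= S * L)%N by rewrite /S /L; nia.
have L0 : (0 < L)%N by rewrite /L; nia.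
have Sd1 : (2 * S <= d1)%N by rewrite /S; nia.
have rLd2 : (r * (2 * L) <= d2)%N by rewrite /L; nia.
have [a ainj] := exists_proj xinj.
set t := fun i => (a *m x i) 0 0.
have [rho [pi [s [rK [ts s_lt]]]]] := exists_sort ainj.
pose y (c p : nat) : R :=
  match insub c, insub p with Some c0, Some p1 => z (pi p1) c0 0 | _, _ => 0 end.
pose W1 : 'M[R]_(d1, k) := \matrix_(l, kk) (if (l./2 < S)%N then a 0 kk else 0).
pose b1 : 'cV[R]_d1 := \col_l (if (l./2 < S)%N then - cpt s L l./2 (odd l) else 0).
pose W2 : 'M[R]_(d2, d1) := \matrix_(j, l) W2f s y L S j l.
pose W3 : 'M[R]_(r, d2) := \matrix_(c, j) W3f R L c j.
exists W1, b1, W2, 0, W3, 0 => i.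
have pS : (rho i < S * L)%N := leq_trans (ltn_ord _) nSL.
have R1 : relu (W1 *m x i + b1) = \col_l h1 s L S (s (rho i)) l.
  apply/matrixP => l j; rewrite (ord1 j) !mxE /h1.
  case: ifP => lS.
    rewrite -ts /t mxE; congr (Num.max (_ + _) 0).
    by apply: eq_bigr => kk _; rewrite mxE lS.
  rewrite big1; last by move=> kk _; rewrite mxE lS mul0r.
  by rewrite add0r maxxx.
have R2 : relu (W2 *m relu (W1 *m x i + b1) + 0) =
    \col_j Num.max (Aa s y L j (rho i %/ L) * s (rho i) + Ab s y L j (rho i %/ L)) 0.
  apply/matrixP => j l; rewrite (ord1 l) R1 !mxE addr0.
  rewrite -(preact y s_lt L0 j Sd1 pS); congr (Num.max _ 0).
  by apply: eq_bigr => l' _; rewrite !mxE.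
rewrite /net3 R2 addr0; apply/matrixP => c j; rewrite (ord1 j) !mxE.
have cd : (c * (2 * L) + 2 * L <= d2)%N.
  by apply: leq_trans rLd2; rewrite -mulSnr leq_mul2r ltn_ord orbT.
rewrite -[RHS](_ : y c (rho i) = _); last by rewrite /y valK valK rK.
rewrite -(output y s_lt L0 cd pS); apply: eq_bigr => j' _; rewrite !mxE.
by [].
Qed.
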